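(* Let $M^3$ be a real hypersurface in $\mathbb{C}P^2$ or $\mathbb{C}H^2$ and $p\in M$. If $AW\ne\alpha W$ at $p$, write $AW=\alpha W+\beta X$ with $\beta>0$ and $X\in W^\perp$ a unit vector; if $AW=\alpha W$ at $p$, let $X$ be any unit principal vector in $W^\perp$ and set $\beta=0$. Let $Y=\varphi X$, $\lambda=\langle AX,X\rangle$, $\mu=\langle AX,Y\rangle$, $\nu=\langle AY,Y\rangle$ (so $\mu=0$ in the second case). Then $(R(X,Y)\cdot S)X$ and $(R(X,Y)\cdot S)Y$ are multiples of $W$ at $p$ if and only if $\mu=0$ and $$\beta^2\nu^2=-(4c+\lambda\nu)\big(\alpha(\lambda-\nu)-\beta^2\big).$$
   Context: $\mathbb{C}P^2$, $\mathbb{C}H^2$ carry Kähler metrics of constant holomorphic sectional curvature $4c\ne0$, complex structure $J$, connection $\widetilde\nabla$. For a real hypersurface $M$ with unit normal $\xi$: $W$ with $JW=\xi$; $W^\perp$ the holomorphic distribution; $\varphi X=JX-\langle X,W\rangle\xi$; $AX=-\widetilde\nabla_X\xi$; $\alpha=\langle AW,W\rangle$; $R$ the curvature tensor of $M$; $S$ the Ricci tensor, $\langle SX,Y\rangle=\operatorname{trace}\{Z\mapsto R(Z,X)Y\}$; $R(X,Y)\cdot S=R(X,Y)\circ S-S\circ R(X,Y)$. *)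

(* Defs.v *)
(* Pointwise (tangent-space) model of a real hypersurface
   M^3 in CP^2 / CH^2: T_pM is identified, via an orthonormal frame, with
   'rV[R]_3 carrying the standard inner product; linear maps act on the right. *)
From HB Require Import structures.
From mathcomp Require Import all_boot all_order all_algebra.
Set Implicit Arguments. Unset Strict Implicit. Unset Printing Implicit Defensive.
Import Order.TTheory GRing.Theory Num.Theory.
Local Open Scope ring_scope.

Section Hyp.
Variable R : realFieldType.

Definition dotv (u v : 'rV[R]_3) : R := (u *m v^T) 0 0.

Definition ebase (i : 'I_3) : 'rV[R]_3 := delta_mx 0 i.

(* Curvature tensor of M given by the Gauss equation of a real hypersurface in
   a complex space form of constant holomorphic sectional curvature 4c:
   R(X,Y)Z = c(<Y,Z>X - <X,Z>Y + <phiY,Z>phiX - <phiX,Z>phiY - 2<phiX,Y>phiZ)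
             + <AY,Z>AX - <AX,Z>AY. *)
Definition curvR (c : R) (A P : 'M[R]_3) (X Y Z : 'rV[R]_3) : 'rV[R]_3 :=
  c *: (dotv Y Z *: X - dotv X Z *: Y + dotv (Y *m P) Z *: (X *m P)
        - dotv (X *m P) Z *: (Y *m P) - (2 * dotv (X *m P) Y) *: (Z *m P))
  + dotv (Y *m A) Z *: (X *m A) - dotv (X *m A) Z *: (Y *m A).

Definition ricciB (c : R) (A P : 'M[R]_3) (X Y : 'rV[R]_3) : R :=
  \sum_(i < 3) dotv (curvR c A P (ebase i) X Y) (ebase i).

Definition ricciS (c : R) (A P : 'M[R]_3) (X : 'rV[R]_3) : 'rV[R]_3 :=
  \sum_(j < 3) ricciB c A P X (ebase j) *: ebase j.

Definition RdotS (c : R) (A P : 'M[R]_3) (X Y Z : 'rV[R]_3) : 'rV[R]_3 :=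
  curvR c A P X Y (ricciS c A P Z) - ricciS c A P (curvR c A P X Y Z).

End Hyp.

(* Main.v *)
Require Import Defs.
From HB Require Import structures.
From mathcomp Require Import all_boot all_order all_algebra.
From mathcomp Require Import ring lra.
Import Order.TTheory GRing.Theory Num.Theory.
Local Open Scope ring_scope.

Section L0.
Set Implicit Arguments. Unset Strict Implicit. Unset Printing Implicit Defensive.
Variable R : realFieldType.
Implicit Types (u v w : 'rV[R]_3) (M : 'M[R]_3).

Lemma dotvE u v : dotv u v = \sum_k u 0 k * v 0 k.
Proof. by rewrite /dotv !mxE; apply: eq_bigr => k _; rewrite mxE. Qed.
Lemma dotvC u v : dotv u v = dotv v u.
Proof. by rewrite !dotvE; apply: eq_bigr => k _; rewrite mulrC. Qed.
Lemma dotvDl u v w : dotv (u + v) w = dotv u w + dotv v w.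
Proof. by rewrite !dotvE -big_split; apply: eq_bigr => k _; rewrite mxE mulrDl. Qed.
Lemma dotvZl a u w : dotv (a *: u) w = a * dotv u w.
Proof. by rewrite !dotvE mulr_sumr; apply: eq_bigr => k _; rewrite mxE mulrA. Qed.
Lemma dotvNl u w : dotv (- u) w = - dotv u w.
Proof. by rewrite !dotvE -sumrN; apply: eq_bigr => k _; rewrite mxE mulNr. Qed.
Lemma dotvDr u v w : dotv w (u + v) = dotv w u + dotv w v.
Proof. by rewrite dotvC dotvDl !(dotvC w). Qed.
Lemma dotvZr a u w : dotv w (a *: u) = a * dotv w u.
Proof. by rewrite dotvC dotvZl !(dotvC w). Qed.
Lemma dotvNr u w : dotv w (- u) = - dotv w u.
Proof. by rewrite dotvC dotvNl !(dotvC w). Qed.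
Lemma dotv0l u : dotv 0 u = 0.
Proof. by rewrite dotvE big1 // => k _; rewrite mxE mul0r. Qed.
Lemma dotv0r u : dotv u 0 = 0.
Proof. by rewrite dotvC dotv0l. Qed.
Lemma dotv_mulmx u v M : dotv (u *m M) v = dotv u (v *m M^T).
Proof. by rewrite /dotv trmx_mul trmxK mulmxA. Qed.
Lemma dotv_e u i : dotv u (ebase R i) = u 0 i.
Proof.
rewrite dotvE (bigD1 i) //= big1 => [|k hk]; rewrite /ebase !mxE ?eqxx /=.
  by rewrite mulr1 addr0.
by rewrite (negbTE hk) mulr0.
Qed.
Lemma mul_tr_dot u v w : u *m v^T *m w = dotv u v *: w.
Proof. by rewrite [u *m v^T]mx11_scalar mul_scalar_mx. Qed.
End L0.

Section L1.
Set Implicit Arguments. Unset Strict Implicit. Unset Printing Implicit Defensive.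
Variable R : realFieldType.
Implicit Types (u v w : 'rV[R]_3) (M : 'M[R]_3).
Lemma dotv_el u i : dotv (ebase R i) u = u 0 i.
Proof. by rewrite dotvC dotv_e. Qed.
Lemma dotv_eM u i M : dotv (ebase R i *m M) u = (u *m M^T) 0 i.
Proof. by rewrite dotv_mulmx dotv_el. Qed.
Lemma summand (c : R) (A P : 'M[R]_3) V U i :
  dotv (curvR c A P (ebase R i) V U) (ebase R i) =
  c * (dotv V U - U 0 i * V 0 i + dotv (V*m P) U * P i i
   - (U *m P^T) 0 i * (V *m P) 0 i - 2 * ((V *m P^T) 0 i * (U *m P) 0 i))
   + dotv (V*m A) U * A i i - (U *m A^T) 0 i * (V *m A) 0 i.
Proof.
rewrite dotv_e /curvR !dotv_eM !dotv_el.
set a1 := (U *m P^T) 0 i; set a2 := (V *m P^T) 0 i; set a3 := (U *m A^T) 0 i.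
set d1 := dotv V U; set d2 := dotv (V *m P) U; set d3 := dotv (V *m A) U.
rewrite /ebase -!rowE !mxE !eqxx /=.
ring.
Qed.
Lemma sum_curv (c : R) (A P : 'M[R]_3) V U :
  ricciB c A P V U = c * (3 * dotv V U - dotv U V + dotv (V*m P) U * \tr P
   - dotv (U *m P^T) (V *m P) - 2 * dotv (V *m P^T) (U *m P))
   + dotv (V*m A) U * \tr A - dotv (U *m A^T) (V *m A).
Proof.
rewrite /ricciB.
under eq_bigr => i _ do rewrite summand.
rewrite [dotv U V]dotvE [dotv (U *m P^T) _]dotvE [dotv (V *m P^T) _]dotvE
  [dotv (U *m A^T) _]dotvE /mxtrace.
rewrite !big_ord_recl !big_ord0.
ring.
Qed.

Lemma trP0 (P : 'M[R]_3) : P^T = - P -> \tr P = 0.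
Proof.
move=> h; have : \tr P^T = \tr P by rewrite mxtrace_tr.
rewrite h raddfN => h2; lra.
Qed.

Lemma ricciB_form (c : R) (A P : 'M[R]_3) (W : 'rV[R]_3) V U :
  P *m P = W^T *m W - 1%:M -> P^T = - P ->
  ricciB c A P V U = dotv (c *: (5%:R *: V - (3 * dotv V W) *: W)
     + \tr A *: (V *m A) - V *m A *m A) U.
Proof.
move=> hPP hPt; rewrite sum_curv trP0 //.
rewrite !dotv_mulmx !trmxK -!mulmxA hPP !mulmxBr !mulmx1 !mulmxA !mul_tr_dot.
rewrite !(dotvDl, dotvDr, dotvNl, dotvNr, dotvZl, dotvZr).
rewrite -[dotv V (U *m A^T)]dotv_mulmx (dotvC U (V *m A *m A)) (dotvC U V) (dotvC W U).
ring.
Qed.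

Lemma ricciS_form (c : R) (A P : 'M[R]_3) (W : 'rV[R]_3) V :
  P *m P = W^T *m W - 1%:M -> P^T = - P ->
  ricciS c A P V = c *: (5%:R *: V - (3 * dotv V W) *: W)
     + \tr A *: (V *m A) - V *m A *m A.
Proof.
move=> hPP hPt; rewrite /ricciS.
under eq_bigr => j _ do rewrite (ricciB_form _ _ _ _ hPP hPt) dotv_e.
by rewrite -row_sum_delta.
Qed.
End L1.

Section L2.
Set Implicit Arguments. Unset Strict Implicit. Unset Printing Implicit Defensive.
Variable R : realFieldType.
Implicit Types (u v w : 'rV[R]_3) (M : 'M[R]_3).

Lemma mul_tr_entry m n (B : 'M[R]_(m,3)) (C : 'M[R]_(n,3)) i j :
  (B *m C^T) i j = dotv (row i B) (row j C).
Proof. by rewrite dotvE mxE; apply: eq_bigr => k _; rewrite !mxE. Qed.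

Lemma row0v (u : 'rV[R]_3) : row 0 u = u.
Proof. by apply/rowP => k; rewrite mxE. Qed.

Section Frame.
Variables X Y W : 'rV[R]_3.
Hypotheses (hXX : dotv X X = 1) (hYY : dotv Y Y = 1) (hWW : dotv W W = 1)
  (hXY : dotv X Y = 0) (hXW : dotv X W = 0) (hYW : dotv Y W = 0).
Definition Fm : 'M[R]_3 := \matrix_(i < 3, j < 3) (nth 0 [:: X; Y; W] i) 0 j.
Lemma rowFm i : row i Fm = nth 0 [:: X; Y; W] i.
Proof. by apply/rowP => k; rewrite !mxE. Qed.
Lemma FmFmT : Fm *m Fm^T = 1%:M.
Proof.
apply/matrixP => i j; rewrite mul_tr_entry !rowFm !mxE.
have hYX := hXY; have hWX := hXW; have hWY := hYW.
rewrite dotvC in hYX; rewrite dotvC in hWX; rewrite dotvC in hWY.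
by case: i => [[|[|[|?]]] ?]; case: j => [[|[|[|?]]] ?].
Qed.
Lemma FmTFm : Fm^T *m Fm = 1%:M.
Proof. exact: mulmx1C FmFmT. Qed.
Lemma decomp V : V = dotv V X *: X + dotv V Y *: Y + dotv V W *: W.
Proof.
rewrite -{1}[V]mulmx1 -FmTFm mulmxA mulmx_sum_row.
rewrite !big_ord_recl big_ord0 !mul_tr_entry !rowFm row0v /=.
by rewrite addr0 addrA.
Qed.
Lemma trace_frame (A : 'M[R]_3) : \tr A = dotv (X *m A) X + dotv (Y *m A) Y + dotv (W *m A) W.
Proof.
rewrite -[in LHS](mul1mx A) -FmTFm -mulmxA mxtrace_mulC /mxtrace.
rewrite !big_ord_recl big_ord0 !mul_tr_entry !row_mul !rowFm /=.
by rewrite addr0 addrA.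
Qed.
Lemma eq_by_dots V1 V2 : dotv V1 X = dotv V2 X -> dotv V1 Y = dotv V2 Y ->
  dotv V1 W = dotv V2 W -> V1 = V2.
Proof. by move=> h1 h2 h3; rewrite (decomp V1) (decomp V2) h1 h2 h3. Qed.
End Frame.
End L2.


Theorem proposition9 (R : realFieldType) (c : R) (A P : 'M[R]_3)
    (W X : 'rV[R]_3) (beta : R) :
  let alpha := dotv (W *m A) W in
  let Y := X *m P in
  let lambda := dotv (X *m A) X in
  let mu := dotv (X *m A) Y in
  let nu := dotv (Y *m A) Y in
  c != 0 ->
  dotv W W = 1 -> W *m P = 0 -> P *m P = W^T *m W - 1%:M -> P^T = - P ->
  A^T = A ->
  dotv X X = 1 -> dotv X W = 0 -> 0 <= beta ->
  W *m A = alpha *: W + beta *: X ->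
  (beta = 0 -> exists k : R, X *m A = k *: X) ->
  ((exists t : R, RdotS c A P X Y X = t *: W) /\
   (exists t : R, RdotS c A P X Y Y = t *: W))
  <->
  (mu = 0 /\
   beta ^+ 2 * nu ^+ 2 = - (4 * c + lambda * nu) * (alpha * (lambda - nu) - beta ^+ 2)).
Proof.
move=> alpha Y lambda mu nu hc hWW hWP hPP hPt hAt hXX hXW hb hWA hb0.
have hAd u v : dotv (u *m A) v = dotv u (v *m A) by rewrite dotv_mulmx hAt.
have hXP : X *m P = Y by [].
have hXPP : X *m P *m P = - X.
  by rewrite -mulmxA hPP mulmxBr mulmx1 mulmxA mul_tr_dot hXW scale0r add0r.
have hPd u v : dotv (u *m P) v = - dotv u (v *m P) by rewrite dotv_mulmx hPt mulmxN dotvNr.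
have hYP : Y *m P = - X by rewrite -hXPP.
have hYY : dotv Y Y = 1 by rewrite /Y hPd hXPP dotvNr opprK.
have hXY : dotv X Y = 0.
  have := hPd X X; rewrite dotvC -/Y => h; lra.
have hYW : dotv Y W = 0 by rewrite /Y hPd hWP dotv0r oppr0.
have hYX : dotv Y X = 0 by rewrite dotvC.
have hWX : dotv W X = 0 by rewrite dotvC.
have hWY : dotv W Y = 0 by rewrite dotvC.
have hXA : X *m A = lambda *: X + mu *: Y + beta *: W.
  rewrite {1}(decomp hXX hYY hWW hXY hXW hYW (X *m A)) [dotv (X *m A) W]hAd hWA.
  by rewrite dotvDr !dotvZr hXX hXW mulr0 mulr1 add0r.
have hYA : Y *m A = mu *: X + nu *: Y.
  rewrite {1}(decomp hXX hYY hWW hXY hXW hYW (Y *m A)) [dotv (Y *m A) W]hAd hWA.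
  rewrite dotvDr !dotvZr hYX hYW !mulr0 addr0 scale0r addr0.
  by rewrite [dotv (Y *m A) X]hAd dotvC.
have htr : \tr A = lambda + nu + alpha by rewrite (trace_frame hXX hYY hWW hXY hXW hYW).
have key V : (exists t, V = t *: W) <-> (dotv V X = 0 /\ dotv V Y = 0).
  split=> [[t ->]|[h1 h2]]; first by rewrite !dotvZl hWX hWY mulr0.
  exists (dotv V W); by rewrite {1}(decomp hXX hYY hWW hXY hXW hYW V) h1 h2 !scale0r !add0r.
have hmuXA : mu = dotv (X *m A) Y by [].
clearbody alpha lambda mu nu.
clearbody Y.
set F := - nu * beta ^+ 2 - mu ^+ 2 * alpha + lambda * nu * alpha + 4 * c * alpha.
pose cb := fun a b d : R => a *: X + b *: Y + d *: W.
have cbD a b d a' b' d' : cb a b d + cb a' b' d' = cb (a + a') (b + b') (d + d').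
  by apply/rowP => i; rewrite /cb !mxE; ring.
have cbN a b d : - cb a b d = cb (- a) (- b) (- d).
  by apply/rowP => i; rewrite /cb !mxE; ring.
have cbZ k a b d : k *: cb a b d = cb (k * a) (k * b) (k * d).
  by apply/rowP => i; rewrite /cb !mxE; ring.
have cbA a b d : cb a b d *m A =
    cb (a * lambda + b * mu + d * beta) (a * mu + b * nu) (a * beta + d * alpha).
  rewrite /cb !mulmxDl -!scalemxAl hXA hYA hWA.
  by apply/rowP => i; rewrite !mxE; ring.
have cbP a b d : cb a b d *m P = cb (- b) a 0.
  rewrite /cb !mulmxDl -!scalemxAl hXP hYP hWP.
  by apply/rowP => i; rewrite !mxE; ring.
have cbdot a b d a' b' d' : dotv (cb a b d) (cb a' b' d') = a * a' + b * b' + d * d'.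
  rewrite /cb !(dotvDl, dotvDr, dotvZl, dotvZr).
  rewrite hXX hYY hWW hXY hYX hXW hWX hYW hWY; ring.
have eXc : X = cb 1 0 0 by apply/rowP => i; rewrite /cb !mxE; ring.
have eYc : Y = cb 0 1 0 by apply/rowP => i; rewrite /cb !mxE; ring.
have eWc : W = cb 0 0 1 by apply/rowP => i; rewrite /cb !mxE; ring.
clearbody cb.
have e1 : dotv (RdotS c A P X Y X) X = 2 * mu * F.
  rewrite /RdotS !(ricciS_form _ _ _ hPP hPt) htr /curvR eXc eYc eWc.
  do 12 rewrite ?cbA ?cbP ?cbdot ?cbZ ?cbN ?cbD.
  rewrite /F; ring.
have e2 : dotv (RdotS c A P X Y X) Y = 4 * c * beta ^+ 2 + (nu - lambda) * F.
  rewrite /RdotS !(ricciS_form _ _ _ hPP hPt) htr /curvR eXc eYc eWc.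
  do 12 rewrite ?cbA ?cbP ?cbdot ?cbZ ?cbN ?cbD.
  rewrite /F; ring.
have e3 : dotv (RdotS c A P X Y Y) X = 4 * c * beta ^+ 2 + (nu - lambda) * F.
  rewrite /RdotS !(ricciS_form _ _ _ hPP hPt) htr /curvR eXc eYc eWc.
  do 12 rewrite ?cbA ?cbP ?cbdot ?cbZ ?cbN ?cbD.
  rewrite /F; ring.
have e4 : dotv (RdotS c A P X Y Y) Y = - (2 * mu * F).
  rewrite /RdotS !(ricciS_form _ _ _ hPP hPt) htr /curvR eXc eYc eWc.
  do 12 rewrite ?cbA ?cbP ?cbdot ?cbZ ?cbN ?cbD.
  rewrite /F; ring.
have k1 := key (RdotS c A P X Y X); have k2 := key (RdotS c A P X Y Y).
rewrite e1 e2 in k1; rewrite e3 e4 in k2.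
have hE : beta ^+ 2 * nu ^+ 2 - (- (4 * c + lambda * nu) * (alpha * (lambda - nu) - beta ^+ 2))
   = - (4 * c * beta ^+ 2 + (nu - lambda) * F) - mu ^+ 2 * (nu - lambda) * alpha.
  rewrite /F; ring.
split.
- move=> [/k1 [h1 h2] /k2 [h3 h4]].
  have hmu : mu = 0.
    apply/eqP; apply/negP => /negP hmu.
    have hF : F = 0.
      move/eqP: h1; rewrite !mulf_eq0 (negbTE hmu) orbF => /orP [|/eqP //].
      by rewrite pnatr_eq0.
    have h4c : 4 * c != 0 by rewrite mulf_neq0 // pnatr_eq0.
    have hb00 : beta = 0.
      apply/eqP; rewrite -sqrf_eq0.
      by move: h2; rewrite hF mulr0 addr0 => /eqP; rewrite mulf_eq0 (negbTE h4c).
    have [k hk] := hb0 hb00.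
    by move: hmu; rewrite hmuXA hk dotvZl hXY mulr0 eqxx.
  split=> //; apply/eqP; rewrite -subr_eq0 hE h2 hmu; apply/eqP; ring.
- move=> [hmu heq].
  have h2 : 4 * c * beta ^+ 2 + (nu - lambda) * F = 0.
    move: hE; rewrite hmu heq subrr => /eqP; rewrite eq_sym subr_eq0.
    move=> /eqP h; rewrite -[LHS]opprK h; ring.
  by split; [apply/k1 | apply/k2]; rewrite hmu h2 !mulr0 ?mul0r ?oppr0.
Qed.
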